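(* Let $\lambda$ be a nonempty partition and $\tau=(i,j)$ a corner cell of its Young diagram ($j=\lambda_i$ and either $i=\ell$ or $\lambda_{i+1}<\lambda_i$). Let $\hat\lambda$ be $\lambda$ with the cell $\tau$ removed, $\alpha=(\lambda_1-j,\dots,\lambda_{i-1}-j)$ (zero parts discarded) and $\beta=(\lambda_{i+1},\dots,\lambda_\ell)$. Then $$N(\lambda)=N(\hat\lambda)\cdot N(\mathbb 1)+N(\alpha)\cdot N(\beta)=N(\hat\lambda)+N(\alpha)\,N(\beta).$$
   Context: A partition $\lambda=(\lambda_1\ge\dots\ge\lambda_\ell>0)$ is identified with its Young (Ferrers) diagram $\{(r,c):1\le r\le\ell,\ 1\le c\le\lambda_r\}$. For partitions $\mu,\lambda$, $\mu\subseteq\lambda$ means $\mu_k\le\lambda_k$ for all $k$. The Ferrers set $\mathcal F(\lambda)$ is the set of all partitions $\mu\subseteq\lambda$ (including the empty one), equivalently the set of Dyck/lattice paths whose Ferrers diagram is contained in that of $\lambda$; $N(\lambda)=|\mathcal F(\lambda)|$, and the empty diagram $\mathbb 1$ has $N(\mathbb 1)=1$. *)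

(* Defs.v *)
From mathcomp Require Import all_boot.
Set Implicit Arguments. Unset Strict Implicit. Unset Printing Implicit Defensive.

(* A partition is a finite weakly decreasing sequence of positive integers
   (lambda_1 >= ... >= lambda_l > 0), stored 0-indexed: nth 0 la k = lambda_(k+1). *)
Definition is_partition (la : seq nat) : bool :=
  sorted geq la && all (fun x => 0 < x) la.

(* Ferrers set F(la): partitions mu with mu_k <= la_k for all k.  Since mu_k <= la_k
   forces size mu <= size la, such a mu is encoded by padding it with zeros to length
   size la: a weakly decreasing function f : 'I_(size la) -> nat with f k <= la_k
   (values bounded by la_1, hence in 'I_(la_1 + 1)).  This is a bijection. *)
Definition ferrers_set (la : seq nat) :
    {set {ffun 'I_(size la) -> 'I_(head 0 la).+1}} :=
  [set f : {ffun 'I_(size la) -> 'I_(head 0 la).+1} | [forall k : 'I_(size la), forall m : 'I_(size la),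
              (k <= m) ==> (f m <= f k)]
           && [forall k : 'I_(size la), f k <= nth 0 la k]].

Definition N (la : seq nat) : nat := #|ferrers_set la|.

(* la with the cell in row i (0-indexed) and column la_i removed (zero parts dropped). *)
Definition remove_cell (la : seq nat) (i : nat) : seq nat :=
  [seq x <- set_nth 0 la i (nth 0 la i).-1 | 0 < x].

Definition alpha_part (la : seq nat) (i j : nat) : seq nat :=
  [seq x <- [seq y - j | y <- take i la] | 0 < x].

Definition beta_part (la : seq nat) (i : nat) : seq nat := drop i.+1 la.

(* Main.v *)
Require Import Defs.
From mathcomp Require Import all_boot zify.
Set Implicit Arguments. Unset Strict Implicit. Unset Printing Implicit Defensive.

Fixpoint E (la : seq nat) (b : nat) : seq (seq nat) :=
  match la with
  | [::] => [:: [::]]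
  | x :: l => flatten [seq [seq v :: s | s <- E l v] | v <- iota 0 (minn x b).+1]
  end.

Definition D la b := size (E la b).

Lemma D_nil b : D [::] b = 1. Proof. by []. Qed.

Lemma D_cons x l b : D (x :: l) b = \sum_(0 <= v < (minn x b).+1) D l v.
Proof.
rewrite /D.
change (size (flatten [seq [seq v :: s | s <- E l v] | v <- iota 0 (minn x b).+1]) = \sum_(0 <= v < (minn x b).+1) size (E l v)).
rewrite size_flatten /shape -map_comp sumnE big_map /index_iota subn0.
by apply: eq_bigr => v _ /=; rewrite size_map.
Qed.

Lemma flatten_cons_uniq (s : seq nat) (F : nat -> seq (seq nat)) :
  uniq s -> (forall v, uniq (F v)) ->
  uniq (flatten [seq [seq v :: t | t <- F v] | v <- s]).
Proof.
move=> Us UF; elim: s Us => //= v s IH /andP[vs Us].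
rewrite cat_uniq IH // andbT map_inj_uniq ?UF //; last by move=> a c [].
apply/hasPn => t /flatten_mapP[w ws /mapP[u _ ->]].
by apply/mapP => -[u' _ [ew _]]; rewrite -ew ws in vs.
Qed.

Lemma E_uniq la b : uniq (E la b).
Proof.
elim: la b => // x l IH b; exact: (@flatten_cons_uniq (iota 0 (minn x b).+1) (E l) (iota_uniq _ _) IH).
Qed.

Lemma memE la b s :
  (s \in E la b) = [&& size s == size la, sorted geq (b :: s) & all2 leq s la].
Proof.
elim: la b s => [|x l IH] b s.
  by case: s.
apply/idP/idP.
  move=> /flatten_mapP[v]; rewrite mem_iota add0n ltnS leq_min => /andP[_ /andP[vx vb]].
  move=> /mapP[t tE ->]; move: tE; rewrite IH => /and3P[st so a2] /=.
  rewrite eqSS st vx vb a2 /=. by rewrite andbT.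
case: s => [|v t] //; move=> /and3P[]; rewrite eqSS => st /andP[vb so] /andP[vx a2].
apply/flatten_mapP; exists v; first by rewrite mem_iota add0n ltnS leq_min vx; exact: vb.
by apply: map_f; rewrite IH; apply/and3P; split.
Qed.

Definition g (n m : nat) (f : {ffun 'I_n -> 'I_m}) : seq nat := [seq val (f k) | k <- enum 'I_n].

Lemma size_g n m (f : {ffun 'I_n -> 'I_m}) : size (g f) = n.
Proof. by rewrite size_map size_enum_ord. Qed.

Lemma nth_g n m (f : {ffun 'I_n -> 'I_m}) (k : 'I_n) : nth 0 (g f) k = f k.
Proof. by rewrite (nth_map k) ?size_enum_ord ?ltn_ord // nth_ord_enum. Qed.

Lemma g_inj n m : injective (@g n m).
Proof.
move=> f1 f2 e; apply/ffunP => k; apply/val_inj.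
by have := congr1 (fun s => nth 0 s k) e; rewrite !nth_g.
Qed.

Lemma all2_nth (s t : seq nat) : size s = size t ->
  reflect (forall k, k < size s -> nth 0 s k <= nth 0 t k) (all2 leq s t).
Proof.
elim: s t => [|x s IH] [|y t] //=.
  by move=> _; constructor.
move=> [] /IH st; apply: (iffP andP) => [[xy /st H] [|k] //= /H|H]; first by [].
split; first exact: (H 0).
by apply/st => k hk; apply: (H k.+1).
Qed.

Lemma geq_trans : transitive geq.
Proof. by move=> y x z /= h1 h2; exact: leq_trans h2 h1. Qed.

Lemma ferrers_mem la f : (f \in ferrers_set la) = (g f \in E la (head 0 la)).
Proof.
rewrite memE inE size_g eqxx /= path_sortedE; last exact: geq_trans.
have -> : all (geq (head 0 la)) (g f).
  by apply/allP => y /mapP[k _ ->]; have := ltn_ord (f k).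
rewrite /=; congr (_ && _).
  apply/idP/idP.
    move=> /forallP H; apply/(sortedP 0) => i; rewrite size_g => Hi.
    have := H (Ordinal (ltnW Hi)); move/forallP/(_ (Ordinal Hi))/implyP.
    move: (nth_g f (Ordinal (ltnW Hi))) (nth_g f (Ordinal Hi)) => /= -> ->.
    by rewrite leqnSn => /(_ isT).
  move=> so; apply/forallP => k; apply/forallP => m; apply/implyP => km.
  rewrite -!nth_g.
  apply: (sorted_leq_nth geq_trans _ _ so) => //; first by move=> ?; exact: leqnn.
  - by rewrite /= size_g; exact: (@ltn_ord _ k).
  - by rewrite /= size_g; exact: (@ltn_ord _ m).
apply/idP/idP.
  move=> /forallP H; apply/(all2_nth (size_g f)) => k; rewrite size_g => hk.
  by move: (H (Ordinal hk)) (nth_g f (Ordinal hk)) => /= H1 ->.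
move=> /(all2_nth (size_g f)) H; apply/forallP => k.
by rewrite -nth_g; apply: H; rewrite size_g ltn_ord.
Qed.

Lemma N_D la : N la = D la (head 0 la).
Proof.
rewrite /N /D -(size_image (@g _ _)); apply: perm_size; apply: uniq_perm.
- by rewrite map_inj_uniq ?enum_uniq //; exact: g_inj.
- exact: E_uniq.
move=> s; apply/idP/idP.
  by move/imageP => [f fA ->]; rewrite -ferrers_mem.
move=> sE; have := sE; rewrite memE => /and3P[/eqP ss so _].
move: so; rewrite /= path_sortedE; last exact: geq_trans.
move=> /andP[/allP hs _].
pose f := [ffun k : 'I_(size la) => inord (nth 0 s k) : 'I_(head 0 la).+1].
have gf : g f = s.
  apply: (@eq_from_nth _ 0); first by rewrite size_g ss.
  move=> i; rewrite size_g => hi.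
  move: (nth_g f (Ordinal hi)) => /= ->; rewrite ffunE inordK //= ltnS.
  by apply: hs; apply: mem_nth; rewrite ss.
by apply/imageP; exists f; rewrite ?gf // ferrers_mem gf.
Qed.

Lemma D_head l b : head 0 l <= b -> D l b = D l (head 0 l).
Proof.
case: l => // x l /= xb; rewrite !D_cons; congr (\sum_(0 <= v < _.+1) _).
by rewrite minnn; apply/minn_idPl.
Qed.

Lemma D_N l b : all (fun y => y <= b) l -> D l b = N l.
Proof.
move=> H; rewrite N_D D_head //; case: l H => //= x l /andP[] //.
Qed.

Lemma D_cat0 l b : D (l ++ [:: 0]) b = D l b.
Proof.
elim: l b => [|x l IH] b /=.
  by rewrite D_cons min0n big_nat1.
by rewrite !D_cons; apply: eq_bigr => v _; rewrite IH.
Qed.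

Lemma D_filter m b : sorted geq m -> D [seq x <- m | 0 < x] b = D m b.
Proof.
elim: m b => [|x m IH] b //= so.
have sm : sorted geq m by case: m so IH => //= y m /andP[].
case: ifP => [xp|].
  by rewrite !D_cons; apply: eq_bigr => v _; rewrite IH.
move/negbT; rewrite -leqNgt leqn0 => /eqP x0; subst x.
have all0 : all (geq 0) m by apply: order_path_min so; exact: geq_trans.
rewrite D_cons min0n big_nat1 -(IH 0 sm).
have -> : [seq x <- m | 0 < x] = [::].
  elim: m all0 {IH so sm} => //= y m IH0 /andP[y0 /IH0 ->].
  by move: y0; rewrite /= leqn0 => /eqP ->.
by [].
Qed.

Lemma shift_sum (F : nat -> nat) j x b : j <= x ->
  \sum_(0 <= v < (minn x b).+1) (j <= v) * F (v - j)
  = (j <= b) * \sum_(0 <= u < (minn (x - j) (b - j)).+1) F u.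
Proof.
move=> jx; case: (leqP j b) => jb; last first.
  rewrite mul0n big1_seq // => v; rewrite mem_index_iota => /andP[_ vb].
  have -> : (j <= v) = false by apply/negbTE; rewrite -ltnNge; lia.
  by [].
rewrite mul1n (big_cat_nat (n:=j)) //=; last by lia.
rewrite [X in X + _]big1_seq ?add0n; last first.
  move=> v; rewrite mem_index_iota => H.
  by have -> : (j <= v) = false by apply/negbTE; rewrite -ltnNge; lia.
rewrite -{1}(add0n j) big_addn.
have -> : (minn x b).+1 - j = (minn (x - j) (b - j)).+1 by lia.
by apply: eq_bigr => i _; rewrite leq_addl addnK mul1n.
Qed.

Lemma key p j q b : 0 < j -> all (fun y => j <= y) p ->
  D (p ++ j :: q) b
  = D (p ++ j.-1 :: q) b + (j <= b) * (D [seq y - j | y <- p] (b - j) * D q j).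
Proof.
move=> j0; elim: p b => [|x p IH] b /=.
  move=> _; rewrite !D_cons mul1n; case: (leqP j b) => jb.
    have -> : minn j.-1 b = j.-1 by apply/minn_idPl; lia.
    by rewrite prednK // big_nat_recr //= mul1n.
  have -> : minn j.-1 b = b by apply/minn_idPr; lia.
  by rewrite mul0n addn0.
move=> /andP[jx jp]; rewrite !D_cons.
under eq_bigr => v _ do rewrite (IH v jp).
rewrite big_split /=; congr (_ + _).
by rewrite big_distrl /= -(shift_sum (fun u => D [seq y - j | y <- p] u * D q j)).
Qed.

Opaque D N.
Theorem mainTheorem2 (la : seq nat) (i : nat) :
  is_partition la -> la != [::] -> i < size la ->
  (i.+1 == size la) || (nth 0 la i.+1 < nth 0 la i) ->
  let j := nth 0 la i in
  N la = N (remove_cell la i) * N [::]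
         + N (alpha_part la i j) * N (beta_part la i)
  /\ N la = N (remove_cell la i) + N (alpha_part la i j) * N (beta_part la i).
Proof.
move=> /andP[so pos] _ ilt corner j.
have N0 : N [::] = 1 by rewrite N_D.
rewrite N0 muln1; suff H : N la = N (remove_cell la i) + N (alpha_part la i j) * N (beta_part la i) by [].
set p := take i la; set q := drop i.+1 la; set h := head 0 la.
have la_eq : la = p ++ j :: q by rewrite /p /q /j -drop_nth // cat_take_drop.
have jpos : 0 < j by apply: (allP pos); apply: mem_nth.
have allh : all (fun y => y <= h) la.
  rewrite /h; case: (la) so => //= x l sol; rewrite leqnn /=.
  exact: (order_path_min geq_trans sol).
have jh : j <= h by apply: (allP allh); apply: mem_nth.
move: (so) (pos) (allh); rewrite la_eq sorted_cat_cons all_cat all_cat /=.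
move=> /andP[sop pq] /andP[posp /andP[_ posq]] /andP[hp /andP[_ hq]].
have qj : all (fun y => y <= j) q by apply: (order_path_min geq_trans pq).
have pj : all (fun y => j <= y) p.
  move: sop; rewrite -rev_sorted rev_rcons /= => /(order_path_min leq_trans).
  by rewrite all_rev.
have sortp : sorted geq p.
  by move: (so); rewrite la_eq => /cat_sorted2[].
have Nrc : N (remove_cell la i) = D (p ++ j.-1 :: q) h.
  rewrite /remove_cell set_nthE ilt -/p -/q -/j.
  case: (ltnP 1 j) => j1.
    have -> : [seq x <- p ++ j.-1 :: q | 0 < x] = p ++ j.-1 :: q.
      apply/all_filterP; rewrite all_cat posp /= posq andbT; clear -j1; lia.
    apply/esym/D_N; rewrite all_cat hp /= hq andbT; exact: leq_trans (leq_pred j) jh.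
  have j1' : j = 1 by apply/eqP; rewrite eqn_leq j1 jpos.
  have q0 : q = [::].
    case/orP: corner => [/eqP sz| lt].
      by rewrite /q sz drop_size.
    case: (ltnP i.+1 (size la)) => ilt2.
      have : 0 < nth 0 la i.+1 by apply: (allP pos); apply: mem_nth.
      rewrite -/j j1' ltnS leqn0 in lt; by rewrite (eqP lt).
    by rewrite /q drop_oversize.
  rewrite q0 j1' /= filter_cat /= cats0 (all_filterP posp) D_cat0.
  by apply/esym/D_N.
have Nal : N (alpha_part la i j) = D [seq y - j | y <- p] (h - j).
  rewrite /alpha_part -/p -D_filter.
    apply/esym/D_N; apply/allP => y; rewrite mem_filter => /andP[_ /mapP[z zp ->]].
    by have := allP hp z zp; apply: leq_sub2r.
  rewrite sorted_map; apply: (sub_sorted _ sortp) => a c /= H.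
  exact: leq_sub2r.
have Nbe : N (beta_part la i) = D q j by rewrite /beta_part -/q (D_N qj).
by rewrite -la_eq Nrc Nal Nbe N_D -/h {1}la_eq key // jh mul1n.
Qed.
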